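(* For $|z_1|,|z_2|<1$, integers $i,j\ge0$ and $k_1,\ldots,k_{i+j}\ge1$ with $i+j\ge1$ (all 2MPLs below in the variables $(z_1,z_2)$): $$\frac{\partial}{\partial z_1}\mathrm{Li}_{k_1,\ldots,k_{i+j}}(i,j)=\begin{cases}\frac{z_2}{1-z_1z_2}\mathrm{Li}_{k_2,\ldots,k_j}(0,j-1)&(i=0,k_1=1),\\ \frac1{1-z_1}\mathrm{Li}_{k_2,\ldots,k_{i+j}}(i-1,j)&(i>0,k_1=1),\\ \frac1{z_1}\mathrm{Li}_{k_1-1,k_2,\ldots,k_{i+j}}(i,j)&(k_1>1),\end{cases}$$ and, if $j\ge1$, $$\frac{\partial}{\partial z_2}\mathrm{Li}_{k_1,\ldots,k_{i+j}}(i,j)=\begin{cases}\frac{z_1}{1-z_1z_2}\mathrm{Li}_{k_2,\ldots,k_j}(0,j-1)&(i=0,k_1=1),\\ \frac1{1-z_2}\mathrm{Li}_{\mathbf k'}(i,j-1)-\frac1{1-z_2}\mathrm{Li}_{\mathbf k'}(i-1,j)-\frac1{z_2}\mathrm{Li}_{\mathbf k'}(i-1,j)&(i>0,k_{i+1}=1),\\ \frac1{z_2}\mathrm{Li}_{k_1,\ldots,k_i,k_{i+1}-1,k_{i+2},\ldots,k_{i+j}}(i,j)&(k_{i+1}>1),\end{cases}$$ where $\mathbf k'=(k_1,\ldots,k_i,k_{i+2},\ldots,k_{i+j})$.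
   Context: For integers $i,j\ge0$, $k_1,\ldots,k_{i+j}\ge1$ and $|z_1|,|z_2|<1$, the multiple polylogarithm of two variables (2MPL) of main variable $z_1$ is $$\mathrm{Li}_{k_1,\ldots,k_{i+j}}(i,j;z_1,z_2)=\sum_{n_1>n_2>\cdots>n_{i+j}>0}\frac{z_1^{n_1}z_2^{n_{i+1}}}{n_1^{k_1}\cdots n_{i+j}^{k_{i+j}}},$$ with the factor $z_2^{n_{i+1}}$ omitted when $j=0$; the empty 2MPL $\mathrm{Li}_\emptyset(0,0;z_1,z_2)$ equals $1$. *)

(* Defs.v *)
From Stdlib Require Import Reals List.
From Coquelicot Require Import Coquelicot.
Import ListNotations.
Open Scope C_scope.

(* truncated nested sum:
   nsum [(a_1,k_1);...;(a_d,k_d)] M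
     = sum_{M > n_1 > n_2 > ... > n_d > 0} prod_l a_l^{n_l} / n_l^{k_l} *)
Fixpoint nsum (fs : list (C * nat)) (M : nat) : C :=
  match fs with
  | [] => 1
  | (a, k) :: fs' =>
      sum_n (fun n => if (0 <? n)%nat
                      then (pow_n a n / pow_n (RtoC (INR n)) k) * nsum fs' n
                      else RtoC 0) (Nat.pred M)
  end.

(* the base attached to the l-th index (l = 0,...,i+j-1, 0-based):
   z1 for l = 0, times z2 when i = 0; z2 for l = i > 0; 1 otherwise *)
Definition mpl_base (i : nat) (z1 z2 : C) (l : nat) : C :=
  (if (l =? 0)%nat then z1 else 1) * (if (l =? i)%nat then z2 else 1).

Definition mpl_factors (ks : list nat) (i j : nat) (z1 z2 : C) : list (C * nat) :=
  map (fun p => (if (j =? 0)%nat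
                 then (if (fst p =? 0)%nat then z1 else 1)
                 else mpl_base i z1 z2 (fst p), snd p))
      (combine (seq 0 (length ks)) ks).

Definition Li2 (ks : list nat) (i j : nat) (z1 z2 : C) : C :=
  @lim C_CompleteNormedModule (filtermap (nsum (mpl_factors ks i j z1 z2)) eventually).

(* Main.v *)
Require Import Defs.
From Stdlib Require Import Reals List Lia Lra.
From Coquelicot Require Import Coquelicot.
Import ListNotations.
Open Scope C_scope.

Ltac Cfix := match goal with |- ?x = ?y => change (@eq C x y) end;
  repeat change (@plus _ ?a ?b) with (Cplus a b);
  repeat change (@mult _ ?a ?b) with (Cmult a b);
  repeat change (@zero _) with (RtoC 0);
  repeat change (@one _) with (RtoC 1).

Fixpoint facs (g : nat -> C) (s : nat) (ks : list nat) : list (C * nat) :=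
  match ks with
  | [] => []
  | k :: ks' => (g s, k) :: facs g (S s) ks'
  end.

Definition Bf (i j : nat) (z1 z2 : C) (l : nat) : C :=
  if (j =? 0)%nat then (if (l =? 0)%nat then z1 else 1) else mpl_base i z1 z2 l.

Lemma map_combine_facs g s ks :
  map (fun p => (g (fst p), snd p)) (combine (seq s (length ks)) ks) = facs g s ks.
Proof.
  revert s; induction ks as [|k ks IH]; intros s; simpl; auto.
  f_equal; apply IH.
Qed.

Lemma mpl_factors_facs ks i j z1 z2 :
  mpl_factors ks i j z1 z2 = facs (Bf i j z1 z2) 0 ks.
Proof.
  unfold mpl_factors. rewrite <- map_combine_facs. reflexivity.
Qed.

Lemma facs_app g s xs ys :
  facs g s (xs ++ ys) = facs g s xs ++ facs g (s + length xs) ys.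
Proof.
  revert s; induction xs as [|x xs IH]; intros s; simpl.
  - rewrite Nat.add_0_r; auto.
  - f_equal. rewrite IH. f_equal. f_equal. lia.
Qed.

Lemma facs_ext g g' s ks :
  (forall l, (s <= l < s + length ks)%nat -> g l = g' l) -> facs g s ks = facs g' s ks.
Proof.
  revert s; induction ks as [|k ks IH]; intros s H; simpl; auto.
  f_equal. f_equal. apply H; simpl; lia.
  apply IH. intros l Hl; apply H; simpl; lia.
Qed.

Lemma facs_length g s ks : length (facs g s ks) = length ks.
Proof. revert s; induction ks; simpl; auto. Qed.

Fixpoint nsumG (pre : list (C * nat)) (h : nat -> C) (M : nat) : C :=
  match pre with
  | [] => h M
  | (a, k) :: pre' =>
      sum_n (fun n => if (0 <? n)%nat
                      then (pow_n a n / pow_n (RtoC (INR n)) k) * nsumG pre' h n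
                      else RtoC 0) (Nat.pred M)
  end.

Lemma nsumG_ext pre h h' M : (forall m, h m = h' m) -> nsumG pre h M = nsumG pre h' M.
Proof.
  revert M; induction pre as [|[a k] pre IH]; intros M H; simpl; auto.
  apply sum_n_m_ext; intros n. destruct (0 <? n)%nat; auto. rewrite IH; auto.
Qed.

Lemma nsum_app pre fs M : nsum (pre ++ fs) M = nsumG pre (nsum fs) M.
Proof.
  revert M; induction pre as [|[a k] pre IH]; intros M; simpl; auto.
  apply sum_n_m_ext; intros n. destruct (0 <? n)%nat; auto. rewrite IH; auto.
Qed.

Lemma nsumG_app p1 p2 h M : nsumG (p1 ++ p2) h M = nsumG p1 (nsumG p2 h) M.
Proof.
  revert M; induction p1 as [|[a k] p1 IH]; intros M; simpl; auto.
  apply sum_n_m_ext; intros n. destruct (0 <? n)%nat; auto. rewrite IH; auto.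
Qed.

Lemma nsumG_plus pre h1 h2 M :
  nsumG pre (fun m => h1 m + h2 m) M = nsumG pre h1 M + nsumG pre h2 M.
Proof.
  revert M; induction pre as [|[a k] pre IH]; intros M; simpl; auto.
  rewrite <- (sum_n_plus (G:=C_AbelianMonoid)).
  apply sum_n_m_ext; intros n. destruct (0 <? n)%nat.
  - rewrite IH. Cfix. ring.
  - Cfix. ring.
Qed.

Lemma nsumG_scal pre c h M :
  nsumG pre (fun m => c * h m) M = c * nsumG pre h M.
Proof.
  revert M; induction pre as [|[a k] pre IH]; intros M; simpl; auto.
  rewrite <- (sum_n_mult_l (K:=C_Ring)).
  apply sum_n_m_ext; intros n. destruct (0 <? n)%nat.
  - rewrite IH. Cfix. ring.
  - Cfix. ring.
Qed.

Lemma nsumG_minus pre h1 h2 M :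
  nsumG pre (fun m => h1 m - h2 m) M = nsumG pre h1 M - nsumG pre h2 M.
Proof.
  unfold Cminus. rewrite (nsumG_ext pre _ (fun m => h1 m + (-1) * h2 m)).
  rewrite nsumG_plus, nsumG_scal. ring.
  intros; ring.
Qed.

Lemma nsum_nsumG fs M : nsum fs M = nsumG fs (fun _ => 1) M.
Proof.
  rewrite <- (app_nil_r fs) at 1. rewrite nsum_app. reflexivity.
Qed.

Open Scope R_scope.

Lemma powdiff q x : 0 <= x -> (x+1)^(S q) - x^(S q) <= INR (S q) * (x+1)^q.
Proof.
  intros Hx. induction q as [|q IH].
  - simpl. lra.
  - set (A := (x+1)^(S q)) in *. set (B := x^(S q)) in *.
    assert (HB : B <= A) by (apply pow_incr; lra).
    replace ((x+1)^(S (S q))) with ((x+1) * A) by reflexivity.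
    replace (x^(S (S q))) with (x * B) by reflexivity.
    assert (HA : A = (x+1) * (x+1)^q) by reflexivity.
    assert (0 <= B) by (apply pow_le; lra).
    rewrite (S_INR (S q)).
    assert ((x+1) * (A - B) <= (x+1) * (INR (S q) * (x + 1) ^ q)) by (apply Rmult_le_compat_l; lra).
    nra.
Qed.

Definition Sp (p : nat) (r : R) (N : nat) := sum_f_R0 (fun n => INR n ^ p * r ^ n) N.

Lemma Sp_abel0 r N : (1 - r) * Sp 0 r N + r ^ (S N) = 1.
Proof.
  induction N as [|N IH]; unfold Sp in *.
  - simpl. ring.
  - rewrite tech5. replace (INR (S N) ^ 0) with 1 by reflexivity.
    replace (r ^ S (S N)) with (r * r ^ S N) by reflexivity.
    transitivity ((1 - r) * sum_f_R0 (fun n : nat => INR n ^ 0 * r ^ n) N + r ^ S N); [ring|exact IH].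
Qed.

Lemma Sp_abelS q r N : 0 <= r < 1 ->
  (1 - r) * Sp (S q) r N + INR N ^ (S q) * r ^ (S N) <= INR (S q) * Sp q r N.
Proof.
  intros Hr. induction N as [|N IH]; unfold Sp in *.
  - simpl sum_f_R0. rewrite INR_0. replace (0 ^ S q) with 0 by (simpl; ring).
    assert (0 <= INR (S q)) by apply pos_INR.
    assert (0 <= 0 ^ q) by (apply pow_le; lra).
    assert (0 <= 0 ^ q * r ^ 0) by (simpl; lra).
    assert (0 <= INR (S q) * (0 ^ q * r ^ 0)) by (apply Rmult_le_pos; lra). lra.
  - rewrite !tech5.
    assert (Hd := powdiff q (INR N) (pos_INR N)).
    rewrite <- S_INR in Hd.
    assert (0 <= r ^ S N) by (apply pow_le; lra).
    replace (r ^ S (S N)) with (r * r ^ S N) by reflexivity.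
    assert (0 <= INR (S q)) by apply pos_INR.
    nra.
Qed.

Lemma Sp_nonneg p r N : 0 <= r -> 0 <= Sp p r N.
Proof.
  intros Hr. unfold Sp. apply cond_pos_sum. intros n.
  apply Rmult_le_pos; apply pow_le; auto. apply pos_INR.
Qed.

Lemma geom_poly p r : 0 <= r < 1 -> exists K, forall N, Sp p r N <= K.
Proof.
  intros Hr. induction p as [|q IH].
  - exists (/ (1 - r)). intros N. pose proof (Sp_abel0 r N).
    assert (0 <= r ^ S N) by (apply pow_le; lra).
    apply (Rmult_le_reg_l (1 - r)); [lra|]. rewrite Rinv_r; lra.
  - destruct IH as [K HK]. exists (INR (S q) * K / (1 - r)). intros N.
    pose proof (Sp_abelS q r N Hr).
    assert (0 <= INR N ^ S q * r ^ S N).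
    { apply Rmult_le_pos; apply pow_le; [apply pos_INR|lra]. }
    assert (INR (S q) * Sp q r N <= INR (S q) * K).
    { apply Rmult_le_compat_l; [apply pos_INR|auto]. }
    apply (Rmult_le_reg_l (1 - r)); [lra|].
    unfold Rdiv. replace ((1 - r) * (INR (S q) * K * / (1 - r))) with (INR (S q) * K)
      by (field; lra). lra.
Qed.

Lemma sum_bound_pos (g : nat -> R) c N :
  (forall n, (n <= N)%nat -> g n <= (if (0 <? n)%nat then c else 0)) -> 0 <= c ->
  sum_f_R0 g N <= INR N * c.
Proof.
  intros H Hc. induction N as [|N IH].
  - simpl. specialize (H 0%nat (le_n 0)). simpl in H. lra.
  - rewrite tech5. rewrite S_INR.
    assert (sum_f_R0 g N <= INR N * c) by (apply IH; intros; apply H; lia).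
    specialize (H (S N) (le_n _)). simpl in H. lra.
Qed.

Open Scope C_scope.
Open Scope C_scope.

Lemma pow_n_S (a : C) n : pow_n a (S n) = a * pow_n a n.
Proof. reflexivity. Qed.

Lemma pow_n_RtoC (x : R) k : pow_n (RtoC x) k = RtoC (x ^ k).
Proof.
  induction k as [|k IH]; [reflexivity|].
  rewrite pow_n_S, IH. simpl. rewrite RtoC_mult. reflexivity.
Qed.

Lemma Cmod_pow_n (a : C) n : Cmod (pow_n a n) = (Cmod a ^ n)%R.
Proof.
  induction n as [|n IH]; simpl. apply Cmod_1.
  change (Cmod (a * pow_n a n) = (Cmod a * Cmod a ^ n)%R).
  rewrite Cmod_mult, IH. reflexivity.
Qed.

Lemma pow_n_Cmult (a b : C) n : pow_n (a * b) n = pow_n a n * pow_n b n.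
Proof.
  induction n as [|n IH]. simpl. Cfix. ring.
  rewrite !pow_n_S, IH. Cfix. ring.
Qed.

Lemma term_mod (a : C) n k : (0 < n)%nat ->
  Cmod (pow_n a n / pow_n (RtoC (INR n)) k) = (Cmod a ^ n / INR n ^ k)%R.
Proof.
  intros Hn. rewrite pow_n_RtoC.
  assert (Hp : (0 < INR n ^ k)%R) by (apply pow_lt; apply lt_0_INR; lia).
  rewrite Cmod_div. rewrite Cmod_pow_n, Cmod_R, Rabs_pos_eq by lra. reflexivity.
  intro H0. apply RtoC_inj in H0. lra.
Qed.

Lemma term_bound (a : C) n k : (0 < n)%nat ->
  (Cmod (pow_n a n / pow_n (RtoC (INR n)) k) <= Cmod a ^ n)%R.
Proof.
  intros Hn. rewrite term_mod by auto.
  assert (1 <= INR n ^ k)%R.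
  { apply pow_R1_Rle. apply (le_INR 1); lia. }
  assert (0 <= Cmod a ^ n)%R by (apply pow_le; apply Cmod_ge_0).
  unfold Rdiv. rewrite <- (Rmult_1_r (Cmod a ^ n)) at 2.
  apply Rmult_le_compat_l; auto.
  rewrite <- Rinv_1. apply Rinv_le_contravar; lra.
Qed.

Lemma pow_le1 (x : R) n : (0 <= x)%R -> (x <= 1)%R -> (x ^ n <= 1)%R.
Proof. intros. rewrite <- (pow1 n). apply pow_incr. lra. Qed.

Lemma Cmod_sum_n (t : nat -> C) N :
  (Cmod (sum_n t N) <= sum_f_R0 (fun n => Cmod (t n)) N)%R.
Proof.
  rewrite <- sum_n_Reals.
  apply (@norm_sum_n_m C_AbsRing C_NormedModule t 0 N).
Qed.

Definition le1 (fs : list (C * nat)) := List.Forall (fun p => (Cmod (fst p) <= 1)%R) fs.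

Lemma nsumG_crude pre h H M : le1 pre -> (forall m, Cmod (h m) <= H)%R ->
  (Cmod (nsumG pre h M) <= INR (pred M) ^ length pre * H)%R.
Proof.
  intros Hpre Hh. revert M; induction pre as [|[a k] pre IH]; intros M.
  - simpl. rewrite Rmult_1_l. apply Hh.
  - inversion Hpre as [|? ? Ha Hpre']; subst. simpl in Ha.
    specialize (IH Hpre').
    assert (HH : (0 <= H)%R) by (eapply Rle_trans; [apply Cmod_ge_0|apply (Hh 0%nat)]).
    simpl nsumG. eapply Rle_trans; [apply Cmod_sum_n|].
    simpl length. change (INR (pred M) ^ S (length pre))%R with (INR (pred M) * INR (pred M) ^ length pre)%R. rewrite Rmult_assoc.
    apply sum_bound_pos.
    + intros n Hn. destruct (0 <? n)%nat eqn:E.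
      * apply Nat.ltb_lt in E. rewrite Cmod_mult.
        rewrite <- (Rmult_1_l (INR (pred M) ^ length pre * H)).
        apply Rmult_le_compat; try apply Cmod_ge_0.
        -- eapply Rle_trans; [apply term_bound; auto|]. apply pow_le1; [apply Cmod_ge_0|auto].
        -- eapply Rle_trans; [apply IH|]. apply Rmult_le_compat_r; auto.
           apply pow_incr. split; [apply pos_INR|]. apply le_INR; lia.
      * rewrite Cmod_0; lra.
    + apply Rmult_le_pos; auto. apply pow_le, pos_INR.
Qed.

Lemma nsum_crude fs M : le1 fs -> (Cmod (nsum fs M) <= INR (pred M) ^ length fs)%R.
Proof.
  intros H. rewrite nsum_nsumG. rewrite <- (Rmult_1_r (_ ^ _)).
  apply nsumG_crude; auto. intros; rewrite Cmod_1; lra.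
Qed.

Definition first_lt1 (fs : list (C * nat)) :=
  match fs with [] => True | (a, _) :: _ => (Cmod a < 1)%R end.

Lemma nsumG_bound pre : le1 pre -> first_lt1 pre ->
  exists Cb, (0 <= Cb)%R /\ forall h H, (forall m, Cmod (h m) <= H)%R ->
    forall M, (Cmod (nsumG pre h M) <= Cb * H)%R.
Proof.
  intros Hle Hf. destruct pre as [|[a k] pre].
  - exists 1%R. split; [lra|]. intros h H Hh M. simpl. rewrite Rmult_1_l; auto.
  - simpl in Hf. inversion Hle as [|? ? Ha Hpre']; subst.
    destruct (geom_poly (length pre) (Cmod a)) as [K HK]. split; [apply Cmod_ge_0|auto].
    exists K. split. { eapply Rle_trans; [apply (Sp_nonneg (length pre) (Cmod a) 0)|apply HK]. apply Cmod_ge_0. }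
    intros h H Hh M.
    assert (HH : (0 <= H)%R) by (eapply Rle_trans; [apply Cmod_ge_0|apply (Hh 0%nat)]).
    simpl nsumG. eapply Rle_trans; [apply Cmod_sum_n|].
    eapply Rle_trans with (sum_f_R0 (fun n => INR n ^ length pre * Cmod a ^ n * H) (pred M))%R.
    + apply sum_Rle. intros n _. destruct (0 <? n)%nat eqn:E.
      * apply Nat.ltb_lt in E. rewrite Cmod_mult.
        rewrite (Rmult_comm (INR n ^ _)), Rmult_assoc.
        apply Rmult_le_compat; try apply Cmod_ge_0.
        -- apply term_bound; auto.
        -- eapply Rle_trans; [apply nsumG_crude; eauto|]. apply Rmult_le_compat_r; auto.
           apply pow_incr. split; [apply pos_INR|]. apply le_INR; lia.
      * rewrite Cmod_0. apply Rmult_le_pos; auto. apply Rmult_le_pos; apply pow_le; [apply pos_INR|apply Cmod_ge_0].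
    + rewrite <- scal_sum. rewrite (Rmult_comm K H). apply Rmult_le_compat_l; auto. apply HK.
Qed.


Lemma ev_pred : filterlim Nat.pred eventually eventually.
Proof.
  intros P [N HN]. exists (S N). intros n Hn. apply HN. lia.
Qed.

Lemma lim_of (f : nat -> C) (L : C) :
  filterlim f eventually (locally L) ->
  @lim C_CompleteNormedModule (filtermap f eventually) = L.
Proof.
  intros H.
  set (F := filtermap f eventually).
  assert (PF : ProperFilter F) by (apply filtermap_proper_filter; apply eventually_filter).
  assert (Hc : cauchy F).
  { intros eps. exists L. apply H. apply locally_ball. }
  pose proof (@complete_cauchy C_CompleteNormedModule F PF Hc) as Hl.
  apply (@is_filter_lim_unique C_AbsRing C_NormedModule F).
  - apply Proper_StrongProper. exact PF.
  - intros P [eps HP]. eapply filter_imp; [|apply (Hl eps)]. exact HP.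
  - exact H.
Qed.

Lemma lim_plus (u v : nat -> C) a b :
  filterlim u eventually (locally a) -> filterlim v eventually (locally b) ->
  filterlim (fun M => u M + v M) eventually (locally (a + b)).
Proof.
  intros Hu Hv.
  apply (filterlim_comp_2 (F:=eventually) u v (fun x y => @plus C_NormedModule x y) Hu Hv).
  apply (@filterlim_plus C_AbsRing C_NormedModule).
Qed.

Lemma lim_scal (u : nat -> C) a c :
  filterlim u eventually (locally a) ->
  filterlim (fun M => c * u M) eventually (locally (c * a)).
Proof.
  intros Hu. eapply filterlim_comp; [exact Hu|].
  apply (@filterlim_scal_r C_AbsRing C_NormedModule c a).
Qed.

Lemma lim_minus (u v : nat -> C) a b :
  filterlim u eventually (locally a) -> filterlim v eventually (locally b) ->
  filterlim (fun M => u M - v M) eventually (locally (a - b)).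
Proof.
  intros Hu Hv. unfold Cminus.
  apply (filterlim_ext (fun M => u M + (-1) * v M)).
  { intros; ring. }
  replace (a + - b) with (a + (-1) * b) by ring.
  apply lim_plus; auto. apply lim_scal; auto.
Qed.

Lemma lim_const (c : C) : filterlim (fun _ : nat => c) eventually (locally c).
Proof. apply filterlim_const. Qed.

Lemma lim_ext (u v : nat -> C) a : (forall M, u M = v M) ->
  filterlim u eventually (locally a) -> filterlim v eventually (locally a).
Proof. intros H. apply filterlim_ext; auto. Qed.

Lemma lim_norm_eps (u : nat -> C) a (eps : posreal) :
  filterlim u eventually (locally a) ->
  eventually (fun M => (Cmod (u M - a) < eps)%R).
Proof.
  intros Hu. apply (Hu (fun y => (Cmod (y - a) < eps)%R)).
  apply (locally_le_locally_norm (K:=C_AbsRing) (V:=C_NormedModule)).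
  exists eps. intros y Hy. exact Hy.
Qed.

Lemma lim_norm_le (u : nat -> C) a b :
  filterlim u eventually (locally a) -> (forall M, Cmod (u M) <= b)%R ->
  (Cmod a <= b)%R.
Proof.
  intros Hu Hb. apply Rnot_lt_le. intros Hlt.
  assert (He : (0 < Cmod a - b)%R) by lra.
  destruct (lim_norm_eps u a (mkposreal _ He) Hu) as [N HN].
  specialize (HN N (le_n _)). simpl in HN. specialize (Hb N).
  assert (Cmod a <= Cmod (u N) + Cmod (a - u N))%R.
  { replace a with (u N + (a - u N)) at 1 by ring. apply Cmod_triangle. }
  replace (a - u N) with (- (u N - a)) in H by ring. rewrite Cmod_opp in H. lra.
Qed.

Lemma lim_zero_bound (u : nat -> C) (r : nat -> R) :
  (forall M, Cmod (u M) <= r M)%R -> is_lim_seq r 0%R ->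
  filterlim u eventually (locally (RtoC 0)).
Proof.
  intros Hb Hr. apply (filterlim_filter_le_2 _ (locally_norm_le_locally (K:=C_AbsRing) (V:=C_NormedModule) (RtoC 0))).
  intros P [eps HP].
  apply is_lim_seq_spec in Hr. destruct (Hr eps) as [N HN].
  exists N. intros n Hn. apply HP. unfold ball_norm.
  change (Cmod (u n - 0) < eps)%R. replace (u n - 0) with (u n) by ring.
  specialize (HN n Hn). rewrite Rminus_0_r in HN.
  eapply Rle_lt_trans; [apply Hb|]. eapply Rle_lt_trans; [apply Rle_abs|exact HN].
Qed.


Lemma conv_nsum a k fs : (Cmod a < 1)%R -> le1 fs ->
  exists L, filterlim (nsum ((a, k) :: fs)) eventually (locally L).
Proof.
  intros Ha Hfs.
  set (t := fun n => if (0 <? n)%nat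
             then (pow_n a n / pow_n (RtoC (INR n)) k) * nsum fs n else RtoC 0).
  set (b := fun n => (INR n ^ length fs * Cmod a ^ n)%R).
  assert (Hb : ex_series b).
  { destruct (geom_poly (length fs) (Cmod a)) as [K HK]. split; [apply Cmod_ge_0|auto].
    assert (Hf : ex_finite_lim_seq (sum_n b)).
    { apply (ex_finite_lim_seq_incr _ K).
      - intros n. rewrite sum_Sn. change (sum_n b n <= sum_n b n + b (S n))%R.
        assert (0 <= b (S n))%R. { unfold b. apply Rmult_le_pos; apply pow_le; [apply pos_INR|apply Cmod_ge_0]. }
        lra.
      - intros n. rewrite sum_n_Reals. apply HK. }
    destruct Hf as [l Hl]. exists l. exact Hl. }
  assert (Ht : ex_series (K:=C_AbsRing) (V:=C_CompleteNormedModule) t).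
  { apply (ex_series_le _ b); auto. intros n. change (Cmod (t n) <= b n)%R.
    unfold t, b. destruct (0 <? n)%nat eqn:E.
    - apply Nat.ltb_lt in E. rewrite Cmod_mult. rewrite Rmult_comm.
      apply Rmult_le_compat; try apply Cmod_ge_0.
      + eapply Rle_trans; [apply nsum_crude; auto|]. apply pow_incr. split; [apply pos_INR|]. apply le_INR; lia.
      + apply term_bound; auto.
    - rewrite Cmod_0. apply Rmult_le_pos; apply pow_le; [apply pos_INR|apply Cmod_ge_0]. }
  destruct Ht as [L HL]. exists L.
  change (filterlim (fun M => sum_n t (pred M)) eventually (locally L)).
  eapply filterlim_comp; [apply ev_pred|]. exact HL.
Qed.


Definition LimN (fs : list (C * nat)) : C :=
  @lim C_CompleteNormedModule (filtermap (nsum fs) eventually).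

Lemma conv_gen fs : le1 fs -> first_lt1 fs ->
  filterlim (nsum fs) eventually (locally (LimN fs)).
Proof.
  intros Hle Hf. destruct fs as [|[a k] fs].
  - unfold LimN. simpl. 
    assert (E : @lim C_CompleteNormedModule (filtermap (fun _ : nat => RtoC 1) eventually) = RtoC 1).
    { apply lim_of. apply lim_const. }
    change (nsum []) with (fun _ : nat => RtoC 1). rewrite E. apply lim_const.
  - inversion Hle; subst. simpl in Hf.
    destruct (conv_nsum a k fs Hf H2) as [L HL].
    unfold LimN. rewrite (lim_of _ L HL). exact HL.
Qed.

Lemma le1_facs g s ks : (forall l, Cmod (g l) <= 1)%R -> le1 (facs g s ks).
Proof.
  intros H. unfold le1. revert s; induction ks; intros s; simpl; constructor; simpl; auto.
Qed.

Lemma Cmod_mult_le1 (x y : C) : (Cmod x <= 1)%R -> (Cmod y <= 1)%R -> (Cmod (x * y) <= 1)%R.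
Proof.
  intros. rewrite Cmod_mult. rewrite <- (Rmult_1_l 1).
  apply Rmult_le_compat; auto; apply Cmod_ge_0.
Qed.

Lemma Cmod_mult_lt1 (x y : C) : (Cmod x < 1)%R -> (Cmod y <= 1)%R -> (Cmod (x * y) < 1)%R.
Proof.
  intros. rewrite Cmod_mult. pose proof (Cmod_ge_0 x). pose proof (Cmod_ge_0 y). nra.
Qed.

Lemma Bf_le1 i j z1 z2 l : (Cmod z1 < 1)%R -> (Cmod z2 < 1)%R -> (Cmod (Bf i j z1 z2 l) <= 1)%R.
Proof.
  intros H1 H2. unfold Bf, mpl_base.
  destruct (j =? 0)%nat; destruct (l =? 0)%nat; try destruct (l =? i)%nat;
  rewrite ?Cmod_1; try lra;
  apply Cmod_mult_le1; rewrite ?Cmod_1; lra.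
Qed.

Lemma Bf0_lt1 i j z1 z2 : (Cmod z1 < 1)%R -> (Cmod z2 < 1)%R -> (Cmod (Bf i j z1 z2 0) < 1)%R.
Proof.
  intros H1 H2. unfold Bf, mpl_base. simpl.
  destruct (j =? 0)%nat; auto.
  apply Cmod_mult_lt1; auto. destruct i; simpl; rewrite ?Cmod_1; lra.
Qed.

Lemma Li2_LimN ks i j z1 z2 : Li2 ks i j z1 z2 = LimN (facs (Bf i j z1 z2) 0 ks).
Proof. unfold Li2, LimN. rewrite mpl_factors_facs. reflexivity. Qed.

Lemma conv_Li2 ks i j z1 z2 : (Cmod z1 < 1)%R -> (Cmod z2 < 1)%R ->
  filterlim (nsum (facs (Bf i j z1 z2) 0 ks)) eventually (locally (Li2 ks i j z1 z2)).
Proof.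
  intros H1 H2. rewrite Li2_LimN. apply conv_gen.
  - apply le1_facs. intros; apply Bf_le1; auto.
  - destruct ks; simpl; auto. apply Bf0_lt1; auto.
Qed.


Lemma pow_n_pred_mul (z : C) n : z * (RtoC (INR n) * pow_n z (pred n)) = RtoC (INR n) * pow_n z n.
Proof.
  destruct n as [|n]. simpl. Cfix. ring.
  simpl pred. rewrite pow_n_S. ring.
Qed.

Lemma Abound (w z : C) (r : R) n : (0 < r)%R -> (Cmod w <= r)%R -> (Cmod z <= r)%R ->
  (r * Cmod (pow_n w n - pow_n z n) <= INR n * r ^ n * Cmod (w - z))%R.
Proof.
  intros Hr Hw Hz. induction n as [|n IH].
  - simpl. replace (@one C_Ring - @one C_Ring) with (RtoC 0) by (Cfix; ring).
    rewrite Cmod_0. lra.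
  - replace (pow_n w (S n) - pow_n z (S n)) with (w * (pow_n w n - pow_n z n) + pow_n z n * (w - z))
      by (rewrite !pow_n_S; ring).
    set (A := Cmod (pow_n w n - pow_n z n)) in *.
    set (X := Cmod (w - z)) in *.
    assert (HA : (0 <= A)%R) by apply Cmod_ge_0.
    assert (HX : (0 <= X)%R) by apply Cmod_ge_0.
    assert (Ht : (Cmod (w * (pow_n w n - pow_n z n) + pow_n z n * (w - z)) <= Cmod w * A + r ^ n * X)%R).
    { eapply Rle_trans; [apply Cmod_triangle|]. rewrite !Cmod_mult. apply Rplus_le_compat_l.
      apply Rmult_le_compat_r; auto. rewrite Cmod_pow_n. apply pow_incr. split; auto. apply Cmod_ge_0. }
    rewrite S_INR. simpl pow.
    assert (Hrn : (0 <= r ^ n)%R) by (apply pow_le; lra).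
    assert (Hn : (0 <= INR n)%R) by apply pos_INR.
    assert (Hw0 : (0 <= Cmod w)%R) by apply Cmod_ge_0.
    assert (r * Cmod w * A <= r * (INR n * r ^ n * X))%R.
    { rewrite (Rmult_comm r (Cmod w)), Rmult_assoc. apply Rmult_le_compat; nra. }
    nra.
Qed.

Lemma Ebound (w z : C) (r : R) n : (0 < r)%R -> (Cmod w <= r)%R -> (Cmod z <= r)%R ->
  (r ^ 2 * Cmod (pow_n w n - pow_n z n - RtoC (INR n) * pow_n z (pred n) * (w - z))
     <= INR n ^ 2 * r ^ n * Cmod (w - z) ^ 2)%R.
Proof.
  intros Hr Hw Hz. induction n as [|n IH].
  - simpl. replace (@one C_Ring - @one C_Ring - RtoC 0 * @one C_Ring * (w - z)) with (RtoC 0) by (Cfix; ring).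
    rewrite Cmod_0. lra.
  - replace (pow_n w (S n) - pow_n z (S n) - RtoC (INR (S n)) * pow_n z (pred (S n)) * (w - z))
      with ((w - z) * (pow_n w n - pow_n z n) + z * (pow_n w n - pow_n z n - RtoC (INR n) * pow_n z (pred n) * (w - z))).
    2:{ replace (z * (pow_n w n - pow_n z n - RtoC (INR n) * pow_n z (pred n) * (w - z)))
          with (z * (pow_n w n - pow_n z n) - (z * (RtoC (INR n) * pow_n z (pred n))) * (w - z)) by ring.
        rewrite pow_n_pred_mul. simpl pred. rewrite !pow_n_S, S_INR, RtoC_plus. ring. }
    pose proof (Abound w z r n Hr Hw Hz) as HA.
    set (A := Cmod (pow_n w n - pow_n z n)) in *.
    set (E := Cmod (pow_n w n - pow_n z n - RtoC (INR n) * pow_n z (pred n) * (w - z))) in *.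
    set (X := Cmod (w - z)) in *.
    assert (HA0 : (0 <= A)%R) by apply Cmod_ge_0.
    assert (HE0 : (0 <= E)%R) by apply Cmod_ge_0.
    assert (HX : (0 <= X)%R) by apply Cmod_ge_0.
    assert (Ht : (Cmod ((w - z) * (pow_n w n - pow_n z n) + z * (pow_n w n - pow_n z n - RtoC (INR n) * pow_n z (pred n) * (w - z))) <= X * A + r * E)%R).
    { eapply Rle_trans; [apply Cmod_triangle|]. rewrite !Cmod_mult. apply Rplus_le_compat_l.
      apply Rmult_le_compat_r; auto. }
    rewrite S_INR. simpl pow. simpl pow in IH.
    assert (Hrn : (0 <= r ^ n)%R) by (apply pow_le; lra).
    assert (Hn : (0 <= INR n)%R) by apply pos_INR.
    assert (H1 : (r * r * (X * A) <= r * X * (INR n * r ^ n * X))%R).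
    { replace (r * r * (X * A))%R with (r * X * (r * A))%R by ring. apply Rmult_le_compat_l; nra. }
    assert (H2 : (r * r * (r * E) <= r * (INR n * (INR n * 1) * r ^ n * (X * (X * 1))))%R).
    { replace (r * r * (r * E))%R with (r * (r * (r * 1) * E))%R by ring. apply Rmult_le_compat_l; nra. }
    assert (H3 : (r * (r * 1) * Cmod ((w - z) * (pow_n w n - pow_n z n) + z * (pow_n w n - pow_n z n - RtoC (INR n) * pow_n z (pred n) * (w - z))) <= r * (r * 1) * (X * A + r * E))%R).
    { apply Rmult_le_compat_l; nra. }
    assert (H4 : (0 <= (INR n + 1) * (r * r ^ n * (X * X)))%R).
    { apply Rmult_le_pos; [lra|]. apply Rmult_le_pos; [nra|nra]. }
    lra.
Qed.

Lemma deriv_of_quad (F : C -> C) z L (d Kc : R) : (0 < d)%R -> (0 <= Kc)%R ->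
  (forall w, (Cmod (w - z) < d)%R -> (Cmod (F w - F z - (w - z) * L) <= Kc * Cmod (w - z) ^ 2)%R) ->
  is_derive (K := C_AbsRing) (V := C_NormedModule) F z L.
Proof.
  intros Hd HK H. split.
  - apply (@is_linear_scal_l C_AbsRing C_NormedModule).
  - intros x0 Hx0.
    pose proof (@is_filter_lim_locally_unique C_AbsRing (AbsRing_NormedModule C_AbsRing) z x0 Hx0) as Ex. subst x0.
    intros eps.
    assert (Hm : (0 < Rmin d (eps / (Kc + 1)))%R).
    { apply Rmin_pos; auto. apply Rdiv_lt_0_compat; [apply cond_pos|lra]. }
    exists (mkposreal _ Hm). intros y Hy.
    change (Cmod (y - z) < Rmin d (eps / (Kc + 1)))%R in Hy.
    change (Cmod (F y - F z - (y - z) * L) <= eps * Cmod (y - z))%R.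
    assert (Hy1 : (Cmod (y - z) < d)%R) by (eapply Rlt_le_trans; [exact Hy|apply Rmin_l]).
    assert (Hy2 : (Cmod (y - z) <= eps / (Kc + 1))%R) by (left; eapply Rlt_le_trans; [exact Hy|apply Rmin_r]).
    eapply Rle_trans; [apply H; auto|].
    set (X := Cmod (y - z)) in *.
    assert (HX : (0 <= X)%R) by apply Cmod_ge_0.
    assert (He : (0 < eps)%R) by apply cond_pos.
    assert (Kc * X <= eps)%R.
    { apply (Rmult_le_compat_l Kc) in Hy2; auto.
      eapply Rle_trans; [exact Hy2|]. unfold Rdiv.
      rewrite <- Rmult_assoc. rewrite (Rmult_comm Kc eps), Rmult_assoc.
      rewrite <- (Rmult_1_r eps) at 2. apply Rmult_le_compat_l; [lra|].
      apply (Rmult_le_reg_r (Kc + 1)); [lra|]. rewrite Rmult_assoc, Rinv_l by lra. lra. }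
    simpl. nra.
Qed.


Definition Dfun (c : C) (k : nat) (rest : list (C * nat)) (z : C) (m : nat) : C :=
  sum_n (fun n => if (0 <? n)%nat
    then (RtoC (INR n) * pow_n c n * pow_n z (pred n) / pow_n (RtoC (INR n)) k) * nsum rest n
    else RtoC 0) (pred m).

Lemma sum_n_lin3 (f g h : nat -> C) x N :
  sum_n f N - sum_n g N - x * sum_n h N = sum_n (fun n => f n - g n - x * h n) N.
Proof.
  induction N as [|N IH].
  - rewrite !sum_O. reflexivity.
  - rewrite !sum_Sn. rewrite <- IH. Cfix. ring.
Qed.

Definition Delta c k rest z w m :=
  nsum ((c * w, k) :: rest) m - nsum ((c * z, k) :: rest) m - (w - z) * Dfun c k rest z m.

Lemma Delta_bound c k rest z (r : R) : (0 < r < 1)%R -> (Cmod c <= 1)%R -> le1 rest ->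
  exists Hc, (0 <= Hc)%R /\ forall w m, (Cmod w <= r)%R -> (Cmod z <= r)%R ->
    (Cmod (Delta c k rest z w m) <= Hc * Cmod (w - z) ^ 2)%R.
Proof.
  intros Hr Hc Hrest.
  destruct (geom_poly (length rest + 2) r) as [K HK]; [lra|].
  assert (HK0 : (0 <= K)%R) by (eapply Rle_trans; [apply (Sp_nonneg (length rest + 2) r 0); lra|apply HK]).
  exists (K / r ^ 2)%R. split. { apply Rdiv_le_0_compat; auto. apply pow_lt; lra. }
  intros w m Hw Hz.
  set (X := Cmod (w - z)).
  assert (HX : (0 <= X)%R) by apply Cmod_ge_0.
  assert (Hr2 : (0 < r ^ 2)%R) by (apply pow_lt; lra).
  unfold Delta, Dfun. simpl nsum. rewrite sum_n_lin3.
  eapply Rle_trans; [apply Cmod_sum_n|].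
  eapply Rle_trans with (sum_f_R0 (fun n => INR n ^ (length rest + 2) * r ^ n * (X ^ 2 / r ^ 2)) (pred m))%R.
  - apply sum_Rle. intros n _. destruct (0 <? n)%nat eqn:E.
    + apply Nat.ltb_lt in E.
      set (D := pow_n (RtoC (INR n)) k).
      set (R0 := nsum rest n).
      replace (pow_n (c * w) n / D * R0 - pow_n (c * z) n / D * R0 -
               (w - z) * (RtoC (INR n) * pow_n c n * pow_n z (pred n) / D * R0))
        with ((pow_n c n / D) * (pow_n w n - pow_n z n - RtoC (INR n) * pow_n z (pred n) * (w - z)) * R0)
        by (rewrite !pow_n_Cmult; unfold Cdiv; ring).
      rewrite !Cmod_mult.
      pose proof (Ebound w z r n (proj1 Hr) Hw Hz) as HE.
      set (En := Cmod (pow_n w n - pow_n z n - RtoC (INR n) * pow_n z (pred n) * (w - z))) in *.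
      assert (HEn : (En <= INR n ^ 2 * r ^ n * X ^ 2 / r ^ 2)%R).
      { apply (Rmult_le_reg_l (r ^ 2)); auto. unfold Rdiv.
        replace (r ^ 2 * (INR n ^ 2 * r ^ n * X ^ 2 * / r ^ 2))%R with (INR n ^ 2 * r ^ n * X ^ 2)%R
          by (field; lra). exact HE. }
      assert (Ht : (Cmod (pow_n c n / D) <= 1)%R).
      { eapply Rle_trans; [apply term_bound; auto|]. apply pow_le1; auto; apply Cmod_ge_0. }
      assert (HR0 : (Cmod R0 <= INR n ^ length rest)%R).
      { eapply Rle_trans; [apply nsum_crude; auto|]. apply pow_incr. split; [apply pos_INR|]. apply le_INR; lia. }
      assert (HEn0 : (0 <= En)%R) by apply Cmod_ge_0.
      assert (Hp : (Cmod (pow_n c n / D) * En <= INR n ^ 2 * r ^ n * X ^ 2 / r ^ 2)%R).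
      { rewrite <- (Rmult_1_l (INR n ^ 2 * r ^ n * X ^ 2 / r ^ 2)).
        apply Rmult_le_compat; auto; apply Cmod_ge_0. }
      eapply Rle_trans.
      { apply Rmult_le_compat; [apply Rmult_le_pos; apply Cmod_ge_0|apply Cmod_ge_0|exact Hp|exact HR0]. }
      rewrite pow_add. unfold Rdiv. apply Req_le. ring.
    + replace (RtoC 0 - RtoC 0 - (w - z) * RtoC 0) with (RtoC 0) by ring.
      rewrite Cmod_0. apply Rmult_le_pos.
      * apply Rmult_le_pos; apply pow_le; [apply pos_INR|lra].
      * apply Rdiv_le_0_compat; auto. apply pow_le; auto.
  - rewrite <- scal_sum. fold (Sp (length rest + 2) r (pred m)).
    unfold Rdiv. replace (K * / r ^ 2 * X ^ 2)%R with (X ^ 2 * / r ^ 2 * K)%R by ring.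
    apply Rmult_le_compat_l.
    + apply Rmult_le_pos. apply pow_le; auto. left; apply Rinv_0_lt_compat; auto.
    + apply HK.
Qed.


Lemma Cmod_mult_lt1' (x y : C) : (Cmod x <= 1)%R -> (Cmod y < 1)%R -> (Cmod (x * y) < 1)%R.
Proof.
  intros. rewrite Cmod_mult. pose proof (Cmod_ge_0 x). pose proof (Cmod_ge_0 y). nra.
Qed.

Lemma le1_app l1 l2 : le1 l1 -> le1 l2 -> le1 (l1 ++ l2).
Proof. intros; apply Forall_app; auto. Qed.

Lemma deriv_main pre c k rest z L :
  le1 pre -> first_lt1 pre -> (Cmod c <= 1)%R -> le1 rest -> (Cmod z < 1)%R ->
  filterlim (nsumG pre (Dfun c k rest z)) eventually (locally L) ->
  is_derive (K := C_AbsRing) (V := C_NormedModule)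
    (fun w => LimN (pre ++ (c * w, k) :: rest)) z L.
Proof.
  intros Hpre Hf Hc Hrest Hz HL.
  set (r := ((1 + Cmod z) / 2)%R).
  assert (Hz0 := Cmod_ge_0 z).
  assert (Hr : (0 < r < 1)%R) by (unfold r; lra).
  destruct (Delta_bound c k rest z r Hr Hc Hrest) as [Hd [Hd0 HD]].
  destruct (nsumG_bound pre Hpre Hf) as [Cb [Cb0 HCb]].
  assert (Hconv : forall w, (Cmod w < 1)%R ->
    filterlim (nsum (pre ++ (c * w, k) :: rest)) eventually (locally (LimN (pre ++ (c * w, k) :: rest)))).
  { intros w Hw. apply conv_gen.
    - apply le1_app; auto. constructor; auto. simpl. left. apply Cmod_mult_lt1'; auto.
    - destruct pre as [|[a k0] pre]; simpl; auto. apply Cmod_mult_lt1'; auto. }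
  apply (deriv_of_quad _ z L ((1 - Cmod z) / 2) (Cb * Hd)); [lra|apply Rmult_le_pos; auto|].
  intros w Hw.
  assert (Hwr : (Cmod w <= r)%R).
  { replace w with (z + (w - z)) by ring. eapply Rle_trans; [apply Cmod_triangle|]. unfold r. lra. }
  set (u := fun M => nsum (pre ++ (c * w, k) :: rest) M - nsum (pre ++ (c * z, k) :: rest) M
                     - (w - z) * nsumG pre (Dfun c k rest z) M).
  assert (Hu : filterlim u eventually (locally (LimN (pre ++ (c * w, k) :: rest) - LimN (pre ++ (c * z, k) :: rest) - (w - z) * L))).
  { apply lim_minus; [apply lim_minus|apply lim_scal; auto]. all: apply Hconv; lra. }
  apply (lim_norm_le u); auto.
  intros M. unfold u. rewrite !nsum_app.
  rewrite <- nsumG_scal, <- nsumG_minus, <- nsumG_minus.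
  rewrite Rmult_assoc. apply HCb. intros m. apply HD; [exact Hwr|unfold r; lra].
Qed.


Definition twist (x : C) (fs : list (C * nat)) :=
  match fs with [] => [] | (b, k) :: r => (b * x, k) :: r end.

Lemma INR_neq0C n : (0 < n)%nat -> RtoC (INR n) <> RtoC 0.
Proof. intros H E. apply RtoC_inj in E. apply (not_0_INR n); [lia|auto]. Qed.

Lemma pow_n_neq0 (x : C) k : x <> RtoC 0 -> pow_n x k <> RtoC 0.
Proof.
  intros H. induction k as [|k IH]; simpl.
  - intro E. apply RtoC_inj in E. lra.
  - change (x * pow_n x k <> RtoC 0). apply Cmult_neq_0; auto.
Qed.

Lemma Dfun_Sk c k rest z m : z <> RtoC 0 ->
  Dfun c (S k) rest z m = / z * nsum ((c * z, k) :: rest) m.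
Proof.
  intros Hz. unfold Dfun. simpl nsum. rewrite <- (sum_n_mult_l (K:=C_Ring)).
  apply sum_n_m_ext. intros n. destruct (0 <? n)%nat eqn:E.
  - apply Nat.ltb_lt in E. destruct n as [|n]; [lia|].
    simpl pred. rewrite pow_n_Cmult. rewrite (pow_n_S z n). rewrite (pow_n_S (RtoC (INR (S n))) k).
    pose proof (INR_neq0C (S n) E). pose proof (pow_n_neq0 (RtoC (INR (S n))) k H).
    Cfix. field. repeat split; auto.
  - Cfix. ring.
Qed.

Lemma GeoId x rest m :
  (1 - x) * sum_n (fun n => if (0 <? n)%nat then pow_n x (pred n) * nsum rest n else RtoC 0) m
  = nsum (twist x rest) (S m) - pow_n x m * nsum rest (S m).
Proof.
  induction m as [|m IH].
  - rewrite sum_O. simpl. destruct rest as [|[b k] r]; simpl.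
    + Cfix. ring.
    + rewrite !sum_O. simpl. Cfix. ring.
  - rewrite sum_Sn. change (plus ?a ?b) with (Cplus a b).
    replace (0 <? S m)%nat with true by reflexivity. simpl pred.
    rewrite Cmult_plus_distr_l, IH.
    destruct rest as [|[b k] r].
    + simpl. Cfix. ring.
    + simpl twist. simpl nsum. simpl pred.
      rewrite !sum_Sn. change (plus ?a ?b) with (Cplus a b).
      replace (0 <? S m)%nat with true by reflexivity.
      rewrite pow_n_Cmult. rewrite (pow_n_S x m). unfold Cdiv. ring.
Qed.

Lemma Dfun_1 c rest z m : c * z <> RtoC 1 ->
  Dfun c 1 rest z m = c / (1 - c * z) *
    (nsum (twist (c * z) rest) m - pow_n (c * z) (pred m) * nsum rest m).
Proof.
  intros Hx.
  assert (H1 : 1 - c * z <> RtoC 0) by (intro E; apply Hx; rewrite <- (Cplus_0_l (c * z)), <- E; ring).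
  assert (E : Dfun c 1 rest z m = c * sum_n (fun n => if (0 <? n)%nat then pow_n (c * z) (pred n) * nsum rest n else RtoC 0) (pred m)).
  { unfold Dfun. rewrite <- (sum_n_mult_l (K:=C_Ring)). apply sum_n_m_ext. intros n.
    destruct (0 <? n)%nat eqn:En.
    - apply Nat.ltb_lt in En. destruct n as [|n]; [lia|]. simpl pred.
      Cfix. rewrite pow_n_Cmult, pow_n_S.
      assert (pow_n (RtoC (INR (S n))) 1 = RtoC (INR (S n))) by (simpl; Cfix; ring).
      rewrite H. pose proof (INR_neq0C (S n) En). field; auto.
    - Cfix. ring. }
  rewrite E. destruct m as [|m].
  - simpl pred. rewrite sum_O. simpl. destruct rest as [|[b k] r]; simpl.
    + Cfix. field; auto.
    + rewrite !sum_O. simpl. Cfix. field; auto.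
  - simpl pred. rewrite <- GeoId. field. auto.
Qed.

Lemma nsumG_last pre' a k0 x rest M : x <> RtoC 0 ->
  nsumG (pre' ++ [(a, k0)]) (fun m => pow_n x (pred m) * nsum rest m) M
  = / x * nsum (pre' ++ (a * x, k0) :: rest) M.
Proof.
  intros Hx. rewrite nsumG_app, nsum_app, <- nsumG_scal. apply nsumG_ext. intros m.
  simpl nsumG. simpl nsum. rewrite <- (sum_n_mult_l (K:=C_Ring)). apply sum_n_m_ext. intros n.
  destruct (0 <? n)%nat eqn:En.
  - apply Nat.ltb_lt in En. destruct n as [|n]; [lia|]. simpl pred.
    Cfix. rewrite pow_n_Cmult, (pow_n_S x n).
    pose proof (pow_n_neq0 (RtoC (INR (S n))) k0 (INR_neq0C (S n) En)).
    field. auto.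
  - Cfix. ring.
Qed.


Lemma ex_series_pg d (r : R) : (0 <= r < 1)%R -> ex_series (fun n => (INR n ^ d * r ^ n)%R).
Proof.
  intros Hr. set (b := fun n => (INR n ^ d * r ^ n)%R).
  destruct (geom_poly d r Hr) as [K HK].
  assert (Hf : ex_finite_lim_seq (sum_n b)).
  { apply (ex_finite_lim_seq_incr _ K).
    - intros n. rewrite sum_Sn. change (sum_n b n <= sum_n b n + b (S n))%R.
      assert (0 <= b (S n))%R. { unfold b. apply Rmult_le_pos; apply pow_le; [apply pos_INR|lra]. }
      lra.
    - intros n. rewrite sum_n_Reals. apply HK. }
  destruct Hf as [l Hl]. exists l. exact Hl.
Qed.

Lemma lim_pow_nsum x rest : le1 rest -> (Cmod x < 1)%R ->
  filterlim (fun m => pow_n x (pred m) * nsum rest m) eventually (locally (RtoC 0)).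
Proof.
  intros Hr Hx.
  apply (lim_zero_bound _ (fun m => (INR (pred m) ^ length rest * Cmod x ^ (pred m))%R)).
  - intros m. rewrite Cmod_mult, Cmod_pow_n, Rmult_comm.
    apply Rmult_le_compat_r; [apply pow_le, Cmod_ge_0|]. apply nsum_crude; auto.
  - assert (H := ex_series_lim_0 _ (ex_series_pg (length rest) (Cmod x) (conj (Cmod_ge_0 x) Hx))).
    unfold is_lim_seq in *. exact (filterlim_comp _ _ _ Nat.pred (fun n => (INR n ^ length rest * Cmod x ^ n)%R) _ _ _ ev_pred H).
Qed.

Lemma facs_shift g s l : facs g (S s) l = facs (fun n => g (S n)) s l.
Proof. revert s; induction l; intros s; simpl; auto. f_equal. apply IHl. Qed.

Lemma split_nth (ks : list nat) i : (i < length ks)%nat ->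
  ks = firstn i ks ++ nth i ks O :: skipn (S i) ks.
Proof.
  revert i; induction ks as [|k ks IH]; intros i Hi; simpl in Hi; [lia|].
  destruct i as [|i]; simpl; auto. f_equal. apply IH. lia.
Qed.

Lemma firstn_last_nth (ks : list nat) n : (n < length ks)%nat ->
  firstn (S n) ks = firstn n ks ++ [nth n ks O].
Proof.
  revert n; induction ks as [|k ks IH]; intros n Hn; simpl in Hn; [lia|].
  destruct n as [|n]; simpl; auto. f_equal. apply IH. lia.
Qed.

Lemma firstn_len (ks : list nat) i : (i <= length ks)%nat -> length (firstn i ks) = i.
Proof. intros. rewrite firstn_length. lia. Qed.

Lemma skipn_len (ks : list nat) i : length (skipn i ks) = (length ks - i)%nat.
Proof. apply length_skipn. Qed.


Definition c1f (i j : nat) (z2 : C) : C := if (j =? 0)%nat then 1 else (if (i =? 0)%nat then z2 else 1).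

Lemma Bf_z1_0 i j w z2 : Bf i j w z2 0 = c1f i j z2 * w.
Proof. unfold Bf, c1f, mpl_base. simpl. destruct (j =? 0)%nat; destruct i; simpl; ring. Qed.

Lemma Bf_z1_S i j w w' z2 l : Bf i j w z2 (S l) = Bf i j w' z2 (S l).
Proof. unfold Bf, mpl_base. simpl. reflexivity. Qed.

Lemma Li2_z1 k1 tl i j z1 z2 w :
  Li2 (k1 :: tl) i j w z2 = LimN ([] ++ (c1f i j z2 * w, k1) :: facs (Bf i j z1 z2) 1 tl).
Proof.
  rewrite Li2_LimN. simpl. rewrite Bf_z1_0.
  rewrite (facs_ext (Bf i j w z2) (Bf i j z1 z2)); auto.
  intros l Hl. destruct l as [|l]; [lia|]. apply Bf_z1_S.
Qed.

Lemma c1f_le1 i j z2 : (Cmod z2 < 1)%R -> (Cmod (c1f i j z2) <= 1)%R.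
Proof. intros. unfold c1f. destruct (j =? 0)%nat; destruct (i =? 0)%nat; rewrite ?Cmod_1; lra. Qed.

Lemma le1_facs_Bf i j z1 z2 s l : (Cmod z1 < 1)%R -> (Cmod z2 < 1)%R -> le1 (facs (Bf i j z1 z2) s l).
Proof. intros. apply le1_facs. intros; apply Bf_le1; auto. Qed.

Lemma Z1_big k1 tl i j z1 z2 : (Cmod z1 < 1)%R -> (Cmod z2 < 1)%R -> (1 < k1)%nat -> z1 <> RtoC 0 ->
  is_derive (K := C_AbsRing) (V := C_NormedModule)
    (fun w => Li2 (k1 :: tl) i j w z2) z1 (1 / z1 * Li2 ((k1 - 1)%nat :: tl) i j z1 z2).
Proof.
  intros H1 H2 Hk Hz.
  eapply is_derive_ext. { intros w. symmetry. apply (Li2_z1 k1 tl i j z1 z2 w). }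
  apply deriv_main; simpl; auto.
  - constructor.
  - apply c1f_le1; auto.
  - apply le1_facs_Bf; auto.
  - destruct k1 as [|k]; [lia|].
    apply (lim_ext (fun m => / z1 * nsum (facs (Bf i j z1 z2) 0 ((S k - 1)%nat :: tl)) m)).
    { intros m. rewrite Dfun_Sk by auto. simpl facs. rewrite Bf_z1_0. replace (k - 0)%nat with k by lia. reflexivity. }
    replace (1 / z1) with (/ z1) by (unfold Cdiv; ring).
    apply lim_scal. apply conv_Li2; auto.
Qed.

Lemma Z1_one_gen c tl i j z1 z2 L' : (Cmod z1 < 1)%R -> (Cmod z2 < 1)%R ->
  (Cmod c <= 1)%R ->
  filterlim (nsum (twist (c * z1) (facs (Bf i j z1 z2) 1 tl))) eventually (locally L') ->
  filterlim (nsumG [] (Dfun c 1 (facs (Bf i j z1 z2) 1 tl) z1)) eventually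
    (locally (c / (1 - c * z1) * L')).
Proof.
  intros H1 H2 Hc HL.
  assert (Hx : (Cmod (c * z1) < 1)%R) by (apply Cmod_mult_lt1'; auto).
  assert (Hx1 : c * z1 <> RtoC 1) by (intro E; rewrite E, Cmod_1 in Hx; lra).
  simpl nsumG.
  apply (lim_ext (fun m => c / (1 - c * z1) * (nsum (twist (c * z1) (facs (Bf i j z1 z2) 1 tl)) m
      - pow_n (c * z1) (pred m) * nsum (facs (Bf i j z1 z2) 1 tl) m))).
  { intros m. rewrite Dfun_1; auto. }
  apply lim_scal. replace L' with (L' - RtoC 0) by ring.
  apply lim_minus; auto. apply lim_pow_nsum; auto. apply le1_facs_Bf; auto.
Qed.

Lemma twist_z1_pos tl i j z1 z2 : (0 < i)%nat ->
  twist (c1f i j z2 * z1) (facs (Bf i j z1 z2) 1 tl) = facs (Bf (i - 1) j z1 z2) 0 tl.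
Proof.
  intros Hi. destruct tl as [|t tl]; simpl; auto.
  destruct i as [|i]; [lia|]. simpl. replace (i - 0)%nat with i by lia.
  f_equal.
  - f_equal. unfold Bf, c1f, mpl_base. destruct (j =? 0)%nat; simpl; [ring|].
    destruct i; simpl; ring.
  - rewrite !facs_shift. apply facs_ext. intros l _. unfold Bf, mpl_base. reflexivity.
Qed.

Lemma twist_z1_zero tl j z1 z2 : (1 <= j)%nat -> length tl = (j - 1)%nat ->
  twist (c1f 0 j z2 * z1) (facs (Bf 0 j z1 z2) 1 tl) = facs (Bf 0 (j - 1) z1 z2) 0 tl.
Proof.
  intros Hj Hl. destruct tl as [|t tl]; simpl; auto.
  simpl in Hl. destruct j as [|[|j]]; try lia. simpl. replace (j - 0)%nat with j by lia.
  f_equal.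
  - f_equal. unfold Bf, c1f, mpl_base. simpl. ring.
  - rewrite !facs_shift. apply facs_ext. intros l _. unfold Bf, mpl_base. reflexivity.
Qed.

Lemma Z1_pos tl i j z1 z2 : (Cmod z1 < 1)%R -> (Cmod z2 < 1)%R -> (0 < i)%nat ->
  is_derive (K := C_AbsRing) (V := C_NormedModule)
    (fun w => Li2 (1%nat :: tl) i j w z2) z1 (1 / (1 - z1) * Li2 tl (i - 1) j z1 z2).
Proof.
  intros H1 H2 Hi.
  eapply is_derive_ext. { intros w. symmetry. apply (Li2_z1 1 tl i j z1 z2 w). }
  assert (Hc : c1f i j z2 = 1). { unfold c1f. destruct i; [lia|]. destruct (j =? 0)%nat; reflexivity. }
  replace (1 / (1 - z1)) with (c1f i j z2 / (1 - c1f i j z2 * z1)) by (rewrite Hc; f_equal; ring).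
  apply deriv_main; simpl; auto.
  - constructor.
  - apply c1f_le1; auto.
  - apply le1_facs_Bf; auto.
  - apply Z1_one_gen; auto. apply c1f_le1; auto.
    rewrite twist_z1_pos by auto. apply conv_Li2; auto.
Qed.

Lemma Z1_zero tl j z1 z2 : (Cmod z1 < 1)%R -> (Cmod z2 < 1)%R -> (1 <= j)%nat ->
  length tl = (j - 1)%nat ->
  is_derive (K := C_AbsRing) (V := C_NormedModule)
    (fun w => Li2 (1%nat :: tl) 0 j w z2) z1 (z2 / (1 - z1 * z2) * Li2 tl 0 (j - 1) z1 z2).
Proof.
  intros H1 H2 Hj Hl.
  eapply is_derive_ext. { intros w. symmetry. apply (Li2_z1 1 tl 0 j z1 z2 w). }
  assert (Hc : c1f 0 j z2 = z2). { unfold c1f. destruct j; [lia|]. reflexivity. }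
  replace (z2 / (1 - z1 * z2)) with (c1f 0 j z2 / (1 - c1f 0 j z2 * z1)) by (rewrite Hc; f_equal; ring).
  apply deriv_main; simpl; auto.
  - constructor.
  - apply c1f_le1; auto.
  - apply le1_facs_Bf; auto.
  - apply Z1_one_gen; auto. apply c1f_le1; auto.
    rewrite twist_z1_zero by auto. apply conv_Li2; auto.
Qed.


Ltac eqbs := repeat match goal with |- context [(?a =? ?b)%nat] => destruct (Nat.eqb_spec a b) end;
  cbn iota; try lia; try reflexivity.

Definition c2f (i : nat) (z1 : C) : C := if (i =? 0)%nat then z1 else 1.

Lemma c2f_le1 i z1 : (Cmod z1 < 1)%R -> (Cmod (c2f i z1) <= 1)%R.
Proof. intros. unfold c2f. destruct (i =? 0)%nat; rewrite ?Cmod_1; lra. Qed.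

Lemma Li2_z2 ks i j z1 z2 w : (i < length ks)%nat -> (1 <= j)%nat ->
  Li2 ks i j z1 w = LimN (facs (Bf i j z1 z2) 0 (firstn i ks)
     ++ (c2f i z1 * w, nth i ks O) :: facs (Bf i j z1 z2) (S i) (skipn (S i) ks)).
Proof.
  intros Hi Hj. rewrite Li2_LimN. rewrite (split_nth ks i Hi) at 1.
  rewrite facs_app, firstn_len by lia. simpl.
  rewrite (facs_ext (Bf i j z1 w) (Bf i j z1 z2) 0).
  2:{ intros l Hl. rewrite firstn_len in Hl by lia. unfold Bf, mpl_base. eqbs. }
  rewrite (facs_ext (Bf i j z1 w) (Bf i j z1 z2) (S i)).
  2:{ intros l Hl. unfold Bf, mpl_base. eqbs. }
  do 3 f_equal. unfold Bf, c2f, mpl_base. eqbs; subst; ring.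
Qed.

Lemma Z_one_gen c rest z L' : (Cmod z < 1)%R -> (Cmod c <= 1)%R -> le1 rest ->
  filterlim (nsum (twist (c * z) rest)) eventually (locally L') ->
  filterlim (fun m => Dfun c 1 rest z m) eventually (locally (c / (1 - c * z) * L')).
Proof.
  intros H1 Hc Hr HL.
  assert (Hx : (Cmod (c * z) < 1)%R) by (apply Cmod_mult_lt1'; auto).
  assert (Hx1 : c * z <> RtoC 1) by (intro E; rewrite E, Cmod_1 in Hx; lra).
  apply (lim_ext (fun m => c / (1 - c * z) * (nsum (twist (c * z) rest) m
      - pow_n (c * z) (pred m) * nsum rest m))).
  { intros m. rewrite Dfun_1; auto. }
  apply lim_scal. replace L' with (L' - RtoC 0) by ring.
  apply lim_minus; auto. apply lim_pow_nsum; auto.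
Qed.

Lemma first_lt1_facs i j z1 z2 l : (Cmod z1 < 1)%R -> (Cmod z2 < 1)%R ->
  first_lt1 (facs (Bf i j z1 z2) 0 l).
Proof. intros. destruct l; simpl; auto. apply Bf0_lt1; auto. Qed.

Lemma Z2_zero tl j z1 z2 : (Cmod z1 < 1)%R -> (Cmod z2 < 1)%R -> (1 <= j)%nat ->
  length tl = (j - 1)%nat ->
  is_derive (K := C_AbsRing) (V := C_NormedModule)
    (fun w => Li2 (1%nat :: tl) 0 j z1 w) z2 (z1 / (1 - z1 * z2) * Li2 tl 0 (j - 1) z1 z2).
Proof.
  intros H1 H2 Hj Hl.
  eapply is_derive_ext. { intros w. symmetry. apply (Li2_z2 (1%nat :: tl) 0 j z1 z2 w); simpl; lia. }
  simpl firstn. simpl skipn. simpl nth.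
  apply deriv_main; simpl; auto.
  - constructor.
  - unfold c2f; simpl; lra.
  - apply le1_facs_Bf; auto.
  - change (c2f 0 z1) with z1. apply Z_one_gen; auto; [lra|apply le1_facs_Bf; auto|].
    replace (z1 * z2) with (c1f 0 j z2 * z1) by (unfold c1f; destruct j; [lia|]; simpl; ring).
    rewrite twist_z1_zero by auto. apply conv_Li2; auto.
Qed.

Lemma Z2_big ks i j z1 z2 : (Cmod z1 < 1)%R -> (Cmod z2 < 1)%R -> (1 <= j)%nat ->
  (i < length ks)%nat -> (1 < nth i ks O)%nat -> z2 <> RtoC 0 ->
  is_derive (K := C_AbsRing) (V := C_NormedModule)
    (fun w => Li2 ks i j z1 w) z2
    (1 / z2 * Li2 (firstn i ks ++ (nth i ks O - 1)%nat :: skipn (S i) ks) i j z1 z2).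
Proof.
  intros H1 H2 Hj Hi Hk Hz.
  eapply is_derive_ext. { intros w. symmetry. apply (Li2_z2 ks i j z1 z2 w); auto. }
  apply deriv_main.
  - apply le1_facs_Bf; auto.
  - apply first_lt1_facs; auto.
  - apply c2f_le1; auto.
  - apply le1_facs_Bf; auto.
  - auto.
  - remember (nth i ks O) as kk. destruct kk as [|k]; [lia|].
    set (pre := facs (Bf i j z1 z2) 0 (firstn i ks)).
    set (rest := facs (Bf i j z1 z2) (S i) (skipn (S i) ks)).
    apply (lim_ext (fun M => / z2 * nsum (facs (Bf i j z1 z2) 0 (firstn i ks ++ (S k - 1)%nat :: skipn (S i) ks)) M)).
    { intros M. rewrite facs_app, firstn_len by lia. simpl.
      rewrite nsum_app, <- nsumG_scal. apply nsumG_ext. intros m.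
      rewrite Dfun_Sk by auto. replace (k - 0)%nat with k by lia.
      do 3 f_equal. unfold Bf, c2f, mpl_base. eqbs; subst; ring. }
    replace (1 / z2) with (/ z2) by (unfold Cdiv; ring).
    apply lim_scal. apply conv_Li2; auto.
Qed.


Lemma Z2_pos ks i j z1 z2 : (Cmod z1 < 1)%R -> (Cmod z2 < 1)%R -> (1 <= j)%nat ->
  length ks = (i + j)%nat -> (0 < i)%nat -> nth i ks O = 1%nat -> z2 <> RtoC 0 ->
  is_derive (K := C_AbsRing) (V := C_NormedModule)
    (fun w => Li2 ks i j z1 w) z2
    (1 / (1 - z2) * Li2 (firstn i ks ++ skipn (S i) ks) i (j - 1) z1 z2
     - 1 / (1 - z2) * Li2 (firstn i ks ++ skipn (S i) ks) (i - 1) j z1 z2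
     - 1 / z2 * Li2 (firstn i ks ++ skipn (S i) ks) (i - 1) j z1 z2).
Proof.
  intros H1 H2 Hj Hlen Hi Hk Hz.
  assert (Hil : (i < length ks)%nat) by lia.
  eapply is_derive_ext. { intros w. symmetry. apply (Li2_z2 ks i j z1 z2 w); auto. }
  assert (Hc2 : c2f i z1 = 1) by (unfold c2f; destruct i; [lia|reflexivity]).
  assert (Hz2 : 1 - z2 <> RtoC 0).
  { intro E. assert (z2 = 1) by (rewrite <- (Cplus_0_r z2), <- E; ring). subst. rewrite Cmod_1 in H2. lra. }
  set (x := 1 * z2).
  assert (Hx : x <> RtoC 0) by (unfold x; rewrite Cmult_1_l; auto).
  assert (Hx1 : 1 * z2 <> RtoC 1).
  { rewrite !Cmult_1_l. intro E. subst. rewrite Cmod_1 in H2. lra. }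
  set (B := Bf i j z1 z2).
  set (Ba := Bf i (j - 1) z1 z2).
  set (Bb := Bf (i - 1) j z1 z2).
  set (P := firstn i ks). set (S0 := skipn (S i) ks).
  assert (HP : length P = i) by (apply firstn_len; lia).
  assert (HS : length S0 = (j - 1)%nat) by (unfold S0; rewrite skipn_len; lia).
  set (P' := firstn (i - 1) ks). set (kk := nth (i - 1) ks O).
  assert (HPP : P = P' ++ [kk]).
  { unfold P, P', kk. replace i with (S (i - 1)) at 1 by lia. apply firstn_last_nth. lia. }
  assert (HP' : length P' = (i - 1)%nat) by (apply firstn_len; lia).
  apply deriv_main.
  - apply le1_facs_Bf; auto.
  - apply first_lt1_facs; auto.
  - apply c2f_le1; auto.
  - apply le1_facs_Bf; auto.
  - auto.
  - fold B. fold P. fold S0. rewrite Hc2, Hk.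
    set (rest := facs B (S i) S0).
    assert (EqA : facs B 0 P ++ twist x rest = facs Ba 0 (P ++ S0)).
    { rewrite facs_app, HP. simpl plus. f_equal.
      - apply facs_ext. intros l Hl. rewrite HP in Hl. unfold B, Ba, Bf, mpl_base. eqbs; try ring.
      - unfold rest. destruct S0 as [|s S'] eqn:ES; simpl; auto.
        simpl in HS. f_equal.
        + f_equal. unfold B, Ba, x, Bf, mpl_base. eqbs; try ring.
        + rewrite facs_shift. apply facs_ext. intros l Hl. unfold B, Ba, Bf, mpl_base. eqbs; try ring. }
    assert (EqB : facs B 0 P' ++ (B (i - 1)%nat * x, kk) :: rest = facs Bb 0 (P ++ S0)).
    { rewrite HPP, <- app_assoc. simpl app. rewrite facs_app, HP'. simpl plus.
      simpl facs. f_equal.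
      - apply facs_ext. intros l Hl. rewrite HP' in Hl. unfold B, Bb, Bf, mpl_base. eqbs; try ring.
      - f_equal.
        + f_equal. unfold B, Bb, x, Bf, mpl_base. eqbs; try ring.
        + unfold rest. replace (S (i - 1)) with i by lia. rewrite facs_shift. apply facs_ext.
          intros l Hl. unfold B, Bb, Bf, mpl_base. eqbs; try ring. }
    assert (Hpre : facs B 0 P = facs B 0 P' ++ [(B (i - 1)%nat, kk)]).
    { rewrite HPP, facs_app, HP'. reflexivity. }
    apply (lim_ext (fun M => 1 / (1 - x) * (nsum (facs Ba 0 (P ++ S0)) M - / x * nsum (facs Bb 0 (P ++ S0)) M))).
    { intros M.
      rewrite (nsumG_ext _ _ (fun m => 1 / (1 - x) * (nsum (twist x rest) m - pow_n x (pred m) * nsum rest m)))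
        by (intros m; apply Dfun_1; auto).
      rewrite nsumG_scal, nsumG_minus. f_equal. f_equal.
      - rewrite <- nsum_app. rewrite EqA. reflexivity.
      - rewrite Hpre, nsumG_last by auto. rewrite <- EqB. reflexivity. }
    replace (1 / (1 - z2) * Li2 (P ++ S0) i (j - 1) z1 z2 - 1 / (1 - z2) * Li2 (P ++ S0) (i - 1) j z1 z2 -
             1 / z2 * Li2 (P ++ S0) (i - 1) j z1 z2)
      with (1 / (1 - x) * (Li2 (P ++ S0) i (j - 1) z1 z2 - / x * Li2 (P ++ S0) (i - 1) j z1 z2)).
    2:{ unfold x. field. auto. }
    apply lim_scal. apply lim_minus; [|apply lim_scal]; apply conv_Li2; auto.
Qed.


Theorem proposition7p1 (i j : nat) (ks : list nat) (z1 z2 : C) :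
  length ks = (i + j)%nat -> (1 <= i + j)%nat ->
  List.Forall (fun k => (1 <= k)%nat) ks ->
  (Cmod z1 < 1)%R -> (Cmod z2 < 1)%R ->
  let k1 := hd O ks in
  let ki1 := nth i ks O in
  let k' := firstn i ks ++ skipn (S i) ks in
  (* partial derivative in z1 *)
  (i = O -> k1 = 1%nat ->
     is_derive (K := C_AbsRing) (V := C_NormedModule)
       (fun w => Li2 ks i j w z2) z1
       (z2 / (1 - z1 * z2) * Li2 (tl ks) 0 (j - 1) z1 z2)) /\
  ((0 < i)%nat -> k1 = 1%nat ->
     is_derive (K := C_AbsRing) (V := C_NormedModule)
       (fun w => Li2 ks i j w z2) z1
       (1 / (1 - z1) * Li2 (tl ks) (i - 1) j z1 z2)) /\
  ((1 < k1)%nat -> z1 <> RtoC 0 ->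
     is_derive (K := C_AbsRing) (V := C_NormedModule)
       (fun w => Li2 ks i j w z2) z1
       (1 / z1 * Li2 ((k1 - 1)%nat :: tl ks) i j z1 z2)) /\
  (* partial derivative in z2 *)
  ((1 <= j)%nat ->
    (i = O -> k1 = 1%nat ->
       is_derive (K := C_AbsRing) (V := C_NormedModule)
         (fun w => Li2 ks i j z1 w) z2
         (z1 / (1 - z1 * z2) * Li2 (tl ks) 0 (j - 1) z1 z2)) /\
    ((0 < i)%nat -> ki1 = 1%nat -> z2 <> RtoC 0 ->
       is_derive (K := C_AbsRing) (V := C_NormedModule)
         (fun w => Li2 ks i j z1 w) z2
         (1 / (1 - z2) * Li2 k' i (j - 1) z1 z2
          - 1 / (1 - z2) * Li2 k' (i - 1) j z1 z2
          - 1 / z2 * Li2 k' (i - 1) j z1 z2)) /\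
    ((1 < ki1)%nat -> z2 <> RtoC 0 ->
       is_derive (K := C_AbsRing) (V := C_NormedModule)
         (fun w => Li2 ks i j z1 w) z2
         (1 / z2 * Li2 (firstn i ks ++ (ki1 - 1)%nat :: skipn (S i) ks) i j z1 z2))).
Proof.
  intros Hlen Hij _ H1 H2 k1 ki1 k'.
  destruct ks as [|k tl]; [simpl in Hlen; lia|].
  simpl in Hlen. subst k1. simpl hd. cbn [List.tl].
  split; [|split; [|split]].
  - intros Hi Hk. subst i k. apply Z1_zero; auto; lia.
  - intros Hi Hk. subst k. apply Z1_pos; auto.
  - intros Hk Hz. apply Z1_big; auto.
  - intros Hj. split; [|split].
    + intros Hi Hk. subst i k. apply Z2_zero; auto. simpl in Hlen. lia.
    + intros Hi Hk Hz. apply Z2_pos; auto.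
    + intros Hk Hz. apply Z2_big; auto. simpl; lia.
Qed.
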